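(* Let $p\in R_{\delta+\omega}$. (i) Each $p_{n,\alpha}$ is determined by finitely many variables $x_{l,k}$ with $l<n$. (ii) Each $x_{n,m}$ is determined by finitely many terms $p_{l,k}$ with $l>n$ and $k\in\omega$. More generally, for every ordinal $\beta<\delta$ and every $n\in\omega$ and $\alpha$ with $\beta+\omega\le\alpha<\delta+\omega$, there are $r\in\omega$ and $(l_i,\zeta_i)_{i<r}$ with $l_i>n$ and $\beta<\zeta_i<\beta+\omega$ such that for all assignments $a,b$: if $p_{n,\alpha}\circ a\ne p_{n,\alpha}\circ b$ then $(p_{l_i,\zeta_i}\circ a)_{i<r}\ne(p_{l_i,\zeta_i}\circ b)_{i<r}$.
   Context: Throughout, $\delta$ denotes a nonzero countable limit ordinal. Terms: variables are $x_{l,k}$ ($l,k\in\omega$), each taking values in $\{0,1\}$. A term $t$ is given by a finite sequence of variables $(v_0,\dots,v_{r-1})$ and a function $F:2^r\to2$; a variable $v$ is identified with the term $((v),\mathrm{id})$. An assignment $a$ maps variables to $\{0,1\}$ and extends to terms by $t\circ a=F(v_0\circ a,\dots,v_{r-1}\circ a)$. Terms are identified modulo $t=^*s$ iff $t\circ a=s\circ a$ for all assignments $a$. A term depends only on variables in $Y$ if it is $=^*$ to a term using only variables from $Y$. A term or variable $s$ is determined by terms $t_0,\dots,t_n$ if for all assignments $a,b$, $(t_i\circ a)_{i\le n}=(t_i\circ b)_{i\le n}$ implies $s\circ a=s\circ b$. The forcing $\tilde P$: a condition $\tilde p$ has height $\mathrm{ht}(\tilde p)<\omega_1$ and consists of,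 for every limit $\delta<\mathrm{ht}(\tilde p)$ and $n,m,k\in\omega$: a cofinal $\nu_{\delta,n,m}\subseteq\delta$ of order type $\omega$, with $\nu_{\delta,n,m_1}\cap\nu_{\delta,n,m_2}=\emptyset$ for $m_1\ne m_2$; a strictly increasing $j_{\delta,n,m}:\omega\to\omega$; and a surjective $f_{\delta,n,m,k}:2^{[j_{\delta,n,m}(k),\,j_{\delta,n,m}(k+1)-1]}\to2$; ordered by extension. For $\eta$ into $2$ with domain containing $\nu_{\delta,n,m}$, with $\zeta_i$ the $i$-th element of $\nu_{\delta,n,m}$, $g_{\delta,n,m,k}(\eta)=f_{\delta,n,m,k}((\eta(\zeta_i))_{j_{\delta,n,m}(k)\le i<j_{\delta,n,m}(k+1)})$. A function $\eta'$ with $\delta+m$ in its domain and $\eta$ cohere at $\delta+m$ above $k_0$ (with respect to level $n$) if $\eta'(\delta+m)=g_{\delta,n,m,k}(\eta)$ for all $k\ge k_0$. The set $R$: $R=\bigcup_{\delta<\omega_1}R_{\delta+\omega}$, where $p\in R_{\delta+\omega}$ consists of $\tilde p\in\tilde P$ with $\mathrm{ht}(\tilde p)=\delta+1$ and terms $\bar p=(p_{n,\alpha})_{n\in\omega,\alpha<\delta+\omega}$ such that $p_{n,\delta+m}=x_{n,m}$; for $\alpha<\delta$, $p_{n,\alpha}$ depends only on variables $x_{l,k}$ with $l<n$; and for all $n,m\in\omega$ and all limit $\alpha\le\delta$ there is $k_0$ such that for every assignment $a$, $p_{n,\alpha+m}\circ a=g_{\alpha,n,m,k}((p_{n+1,\zeta}\circ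 a)_{\zeta<\alpha})$ for all $k\ge k_0$ (computed from $\tilde p$). Conditions $p,q$ are identified if $\tilde p=\tilde q$ and $p_{n,\alpha}=^*q_{n,\alpha}$ for all $n,\alpha$. *)

(* Defs.v *)
From mathcomp Require Import all_boot.
Set Implicit Arguments. Unset Strict Implicit. Unset Printing Implicit Defensive.

(* ---------- Ordinals ----------
   We fix a nonzero countable limit ordinal delta as an abstract countable
   well-ordered type (D, lt) with no maximum (elements of D = ordinals < delta).
   Ordinals < delta + omega are represented by  D + nat :
   inl beta = beta (< delta),   inr m = delta + m. *)

Definition is_delta (D : Type) (lt : D -> D -> Prop) : Prop :=
  (forall x, ~ lt x x) /\
  (forall x y z, lt x y -> lt y z -> lt x z) /\
  (forall x y, lt x y \/ x = y \/ lt y x) /\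
  well_founded lt /\
  (exists c : D -> nat, injective c) /\
  (exists x : D, True) /\
  (forall x : D, exists y, lt x y).

Definition ltS (D : Type) (lt : D -> D -> Prop) (x y : D + nat) : Prop :=
  match x, y with
  | inl a, inl b => lt a b
  | inl _, inr _ => True
  | inr _, inl _ => False
  | inr m, inr m' => (m < m')%N
  end.

Definition succ_rel (T : Type) (lt : T -> T -> Prop) (x y : T) : Prop :=
  lt x y /\ forall z, lt x z -> z = y \/ lt y z.

Fixpoint plus_nat (T : Type) (lt : T -> T -> Prop) (x : T) (m : nat) (y : T)
  : Prop :=
  match m with
  | 0 => y = x
  | m'.+1 => exists z, plus_nat lt x m' z /\ succ_rel lt z y
  end.

Definition is_limit (D : Type) (lt : D -> D -> Prop) (l : D) : Prop :=
  (exists z, lt z l) /\ (forall z, lt z l -> exists w, lt z w /\ lt w l).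

Definition limit_le_delta (D : Type) (lt : D -> D -> Prop) (a : D + nat) : Prop :=
  a = inr 0 \/ exists l, a = inl l /\ is_limit lt l.

Definition finite_ord (D : Type) (lt : D -> D -> Prop) (g : D) : Prop :=
  exists z k, (forall y, ~ lt y z) /\ plus_nat lt z k g.

Definition omega_plus_le (D : Type) (lt : D -> D -> Prop) (b : D) (a : D + nat)
  : Prop :=
  forall m g, plus_nat lt b m g -> ltS lt (inl g) a.

(* ---------- Terms ----------
   Variable x_{l,k} is the pair (l,k); an assignment is a : nat * nat -> bool.
   A term is a finite sequence of variables with a function F : 2^r -> 2
   (encoded as seq bool -> bool; only its values on sequences of length r
   matter). *)
Record term := Term { tvars : seq (nat * nat); tfun : seq bool -> bool }.

Definition assignment := nat * nat -> bool.

Definition eval (t : term) (a : assignment) : bool :=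
  tfun t [seq a v | v <- tvars t].

Definition term_eq (t s : term) : Prop := forall a, eval t a = eval s a.

Definition depends_below (t : term) (n : nat) : Prop :=
  exists s, all (fun v => (v.1 < n)%N) (tvars s) /\ term_eq s t.

(* ---------- Conditions of R_{delta+omega} ----------
   For each nonzero limit lam <= delta (lam : D + nat) and n, m, k:
   nu lam n m : nat -> D enumerates nu_{lam,n,m} increasingly (zeta_i);
   j lam n m : nat -> nat;  f lam n m k : 2^[j(k), j(k+1)-1] -> 2
   (encoded on seq bool);  P n alpha = p_{n,alpha} for alpha < delta+omega. *)
Record cond (D : Type) := Cond {
  nu : D + nat -> nat -> nat -> nat -> D;
  jj : D + nat -> nat -> nat -> nat -> nat;
  ff : D + nat -> nat -> nat -> nat -> seq bool -> bool;
  P  : nat -> D + nat -> term }.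

Definition gg (D : Type) (p : cond D) (lam : D + nat) (n m k : nat)
  (eta : D -> bool) : bool :=
  ff p lam n m k
    [seq eta (nu p lam n m i) | i <- iota (jj p lam n m k)
                                   (jj p lam n m k.+1 - jj p lam n m k)].

(* tilde p is a condition of tilde P of height delta + 1 *)
Definition tilde_ok (D : Type) (lt : D -> D -> Prop) (p : cond D) : Prop :=
  forall lam, limit_le_delta lt lam ->
  forall n,
    (forall m,
      (forall i, ltS lt (inl (nu p lam n m i)) lam) /\
      (forall i, lt (nu p lam n m i) (nu p lam n m i.+1)) /\
      (forall z, ltS lt (inl z) lam -> exists i, lt z (nu p lam n m i)) /\
      (forall k, (jj p lam n m k < jj p lam n m k.+1)%N) /\
      (forall k (b : bool), exists s : seq bool,
          size s = (jj p lam n m k.+1 - jj p lam n m k)%N /\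
          ff p lam n m k s = b)) /\
    (forall m1 m2 i1 i2, m1 <> m2 -> nu p lam n m1 i1 <> nu p lam n m2 i2).

Definition in_R (D : Type) (lt : D -> D -> Prop) (p : cond D) : Prop :=
  [/\ tilde_ok lt p,
      (forall n m a, eval (P p n (inr m)) a = a (n, m)),
      (forall n (b : D), depends_below (P p n (inl b)) n) &
      (forall n m lam, limit_le_delta lt lam ->
         exists k0, forall (a : assignment) k, (k0 <= k)%N ->
           forall g, plus_nat (ltS lt) lam m g ->
             eval (P p n g) a =
             gg p lam n m k (fun z => eval (P p n.+1 (inl z)) a))].

(* Main.v *)
Require Import Defs.
From mathcomp Require Import all_boot.
From mathcomp Require Import zify.
From Stdlib Require Import Classical.

Set Implicit Arguments. Unset Strict Implicit.

Lemma plus_nat_succ (T:Type) (lt: T->T->Prop) z c m b :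
  succ_rel lt z c -> plus_nat lt c m b -> plus_nat lt z m.+1 b.
Proof.
move=> Hs; elim: m b => [|m IH] b /=.
  by move=> ->; exists z; split.
move=> [w [Hw Hwb]]; exists w; split => //; exact: IH.
Qed.

Lemma between (D:Type) (lt:D->D->Prop) (Hirr : forall x, ~ lt x x)
  (Htr : forall x y z, lt x y -> lt y z -> lt x z)
  (Htri: forall x y, lt x y \/ x = y \/ lt y x) c m g :
  plus_nat lt c m g -> forall zeta, (zeta = c \/ lt c zeta) -> (zeta = g \/ lt zeta g) ->
  exists k, (k <= m)%N /\ plus_nat lt c k zeta /\ plus_nat lt zeta (m - k) g.
Proof.
elim: m g => [|m IH] g /=.
  move=> -> zeta Hc Hg.
  have Ez : zeta = c.
    case: Hc => // Hc; case: Hg => [E|Hg]; first by subst.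
    by case: (Hirr _ (Htr _ _ _ Hc Hg)).
  by subst; exists 0.
move=> [h [Hh [Hhg Hsucc]]] zeta Hc Hg.
case: Hg => [Ez|Hg].
  subst; exists m.+1; split => //; split; first by exists h.
  by rewrite subnn.
have Hzh : zeta = h \/ lt zeta h.
  case: (Htri h zeta) => [H|[E|H]]; [|by left|by right].
  case: (Hsucc _ H) => [E|H2]; first by subst; case: (Hirr _ Hg).
  by case: (Hirr _ (Htr _ _ _ Hg H2)).
have [k [Hk [H1 H2]]] := IH h Hh zeta Hc Hzh.
exists k; split; first by lia.
split => //; rewrite subSn //; exists h; split => //.
Qed.

Lemma min_elt (D:Type) (lt:D->D->Prop) (Hwf : well_founded lt) (Pr : D -> Prop) :
  (exists x, Pr x) -> exists x, Pr x /\ forall y, lt y x -> ~ Pr y.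
Proof.
move=> [x0 Hx0]; apply: NNPP => Hno.
suff: forall x, ~ Pr x by move=> /(_ x0).
elim/(well_founded_ind Hwf) => x IH Hx.
by apply: Hno; exists x; split.
Qed.

Lemma decomp (D : Type) (lt : D -> D -> Prop) (HD: is_delta lt) beta b :
  (forall m g, plus_nat lt beta m g -> lt g b) ->
  exists c m, is_limit lt c /\ lt beta c /\ plus_nat lt c m b.
Proof.
case: HD => [Hirr [Htr [Htri [Hwf _]]]] Hab.
have [c [[m Hcm] Hmin]] :=
  @min_elt D lt Hwf (fun c => exists m, plus_nat lt c m b) (ex_intro _ b (ex_intro _ 0 erefl)).
have Hbc : lt beta c.
  case: (Htri beta c) => [//|Hc].
  have Hb : beta = b \/ lt beta b by right; apply: (Hab 0).
  have Hc' : beta = c \/ lt c beta by case: Hc => [E|H]; [left|right].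
  have [k [_ [_ H2]]] := between Hirr Htr Htri Hcm Hc' Hb.
  by case: (Hirr _ (Hab _ _ H2)).
exists c, m; split => //; split; first by exists beta.
move=> z Hz; apply: NNPP => Hno.
have Hs : succ_rel lt z c.
  split => // y Hy; case: (Htri y c) => [H|[E|H]]; [|by left|by right].
  by case: Hno; exists y.
by apply: (Hmin z Hz); exists m.+1; apply: plus_nat_succ Hs Hcm.
Qed.

Lemma lift_plus D (lt : D -> D -> Prop) c m b :
  plus_nat lt c m b -> plus_nat (ltS lt) (inl c) m (inl b).
Proof.
elim: m b => [|m IH] b /=; first by move=> ->.
move=> [w [Hw [Hwb Hs]]]; exists (inl w); split; first exact: IH.
split => //= -[y|k] /= Hy; last by right.
by case: (Hs y Hy) => [->|H]; [left|right].
Qed.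

Lemma plus_inr D (lt : D -> D -> Prop) m : plus_nat (ltS lt) (inr 0) m (inr m).
Proof.
elim: m => [|m IH] //=; exists (inr m); split => //; split => //= -[y|k] //= Hk.
by move: Hk; rewrite leq_eqVlt => /orP [/eqP <-|H]; [left|right].
Qed.

Lemma ltS_trans D (lt : D -> D -> Prop) (Htr: forall x y z, lt x y -> lt y z -> lt x z)
  x y z : ltS lt x y -> ltS lt y z -> ltS lt x z.
Proof.
move: x y z => [x|x] [y|y] [z|z] //=; try exact: Htr.
move=> H1 H2; exact: ltn_trans H1 H2.
Qed.

Lemma below_plus D (lt : D -> D -> Prop) (Htr: forall x y z, lt x y -> lt y z -> lt x z)
  zeta lam m alpha : ltS lt zeta lam -> plus_nat (ltS lt) lam m alpha -> ltS lt zeta alpha.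
Proof.
move=> Hz; elim: m alpha => [|m IH] alpha /=; first by move=> ->.
move=> [w [Hw [Hwa _]]]; exact: (ltS_trans Htr (IH _ Hw) Hwa).
Qed.

Lemma window_or_above (D : Type) (lt : D -> D -> Prop) (HD : is_delta lt) beta zeta : lt beta zeta ->
  (exists k, (0 < k)%N /\ plus_nat lt beta k zeta) \/
  (forall m g, plus_nat lt beta m g -> lt g zeta).
Proof.
case: HD => [Hirr [Htr [Htri [Hwf _]]]] Hbz.
case: (classic (forall m g, plus_nat lt beta m g -> lt g zeta)) => [H|H]; first by right.
left; apply: NNPP => Hno; apply: H => m g Hg; apply: NNPP => Hgz.
have Hz : zeta = g \/ lt zeta g.
  case: (Htri zeta g) => [H|[E|H]]; [by right|by left|by case: Hgz].
have [k [_ [H1 _]]] := between Hirr Htr Htri Hg (or_intror Hbz) Hz.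
case: k H1 => [|k] H1.
  by move: H1 => /= E; subst; case: (Hirr _ Hbz).
by apply: Hno; exists k.+1.
Qed.

Definition Cert D (lt : D -> D -> Prop) (p : cond D) (beta : D) (n : nat)
  (bad : assignment -> assignment -> Prop) : Prop :=
  exists r (l : nat -> nat) (z : nat -> D),
    (forall i, (i < r)%N -> (n < l i)%N /\ exists k, (0 < k)%N /\ plus_nat lt beta k (z i)) /\
    forall a b, bad a b -> exists i, (i < r)%N /\
      eval (P p (l i) (inl (z i))) a <> eval (P p (l i) (inl (z i))) b.

Lemma cert_or D (lt : D -> D -> Prop) p beta n bad1 bad2 :
  Cert lt p beta n bad1 -> Cert lt p beta n bad2 ->
  Cert lt p beta n (fun a b => bad1 a b \/ bad2 a b).
Proof.
move=> [r1 [l1 [z1 [H1 K1]]]] [r2 [l2 [z2 [H2 K2]]]].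
exists (r1 + r2), (fun i => if (i < r1)%N then l1 i else l2 (i - r1)),
  (fun i => if (i < r1)%N then z1 i else z2 (i - r1)); split.
  move=> i Hi; case: (ltnP i r1) => Hir /=; first exact: H1.
  apply: H2; lia.
move=> a b [Hb|Hb].
  have [i [Hi Hd]] := K1 a b Hb; exists i; split; first by lia.
  by rewrite Hi.
have [i [Hi Hd]] := K2 a b Hb; exists (r1 + i); split; first by lia.
have -> : (r1 + i < r1)%N = false by lia.
by rewrite addKn.
Qed.

Lemma cert_mono D (lt : D -> D -> Prop) p beta n (bad1 bad2 : assignment -> assignment -> Prop) :
  (forall a b, bad2 a b -> bad1 a b) -> Cert lt p beta n bad1 -> Cert lt p beta n bad2.
Proof.
move=> Himp [r [l [z [H K]]]]; exists r, l, z; split => // a b /Himp; exact: K.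
Qed.

Lemma cert_le D (lt : D -> D -> Prop) p beta n n' bad :
  (n' <= n)%N -> Cert lt p beta n bad -> Cert lt p beta n' bad.
Proof.
move=> Hn [r [l [z [H K]]]]; exists r, l, z; split => // i Hi.
have [H1 H2] := H i Hi; split => //; lia.
Qed.

Lemma cert_seq D (lt : D -> D -> Prop) p beta n (bad : nat -> assignment -> assignment -> Prop)
  (s : seq nat) :
  (forall x, x \in s -> Cert lt p beta n (bad x)) ->
  Cert lt p beta n (fun a b => exists x, x \in s /\ bad x a b).
Proof.
elim: s => [|x s IH] Hs.
  exists 0, (fun _ => 0), (fun _ => beta); split => // a b [x [Hx _]].
  by rewrite in_nil in Hx.
have H1 := Hs x (mem_head _ _).
have H2 : Cert lt p beta n (fun a b => exists y, y \in s /\ bad y a b).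
  by apply: IH => y Hy; apply: Hs; rewrite in_cons Hy orbT.
apply: cert_mono (cert_or H1 H2) => a b [y [Hy Hb]].
move: Hy; rewrite in_cons => /orP [/eqP E|Hy]; first by subst; left.
by right; exists y.
Qed.

Lemma step (D : Type) (lt : D -> D -> Prop) (HD : is_delta lt) p (Hp : in_R lt p) beta (alpha lam : D + nat) m :
  limit_le_delta lt lam -> ltS lt (inl beta) lam -> plus_nat (ltS lt) lam m alpha ->
  (forall zeta, ltS lt (inl zeta) alpha -> (forall k g, plus_nat lt beta k g -> lt g zeta) ->
     forall n, Cert lt p beta n
       (fun a b => eval (P p n (inl zeta)) a <> eval (P p n (inl zeta)) b)) ->
  forall n, Cert lt p beta n (fun a b => eval (P p n alpha) a <> eval (P p n alpha) b).
Proof.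
move=> Hlam Hbl Hpl IH n.
have HD' := HD; case: HD' => [Hirr [Htr [Htri [Hwf _]]]].
case: Hp => Htil _ _ Hcoh.
have [k0 Hk0] := Hcoh n m lam Hlam.
have [Hnu _] := Htil lam Hlam n.
have [Hin [Hinc [Hcof [Hjj _]]]] := Hnu m.
have [i0 Hi0] := Hcof beta Hbl.
set k := maxn k0 i0.
have Hjk : forall q, (q <= jj p lam n m q)%N.
  elim => [//|q IHq]; exact: leq_ltn_trans IHq (Hjj q).
have Hmono : forall i d, nu p lam n m i = nu p lam n m (i + d) \/
                        lt (nu p lam n m i) (nu p lam n m (i + d)).
  move=> i; elim => [|d IHd]; first by rewrite addn0; left.
  right; rewrite addnS; case: IHd => [->|H]; first exact: Hinc.
  exact: Htr H (Hinc _).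
have Hbig : forall i, (jj p lam n m k <= i)%N -> lt beta (nu p lam n m i).
  move=> i Hi.
  have Hi0i : (i0 <= i)%N.
    apply: leq_trans _ Hi; apply: leq_trans (Hjk k); exact: leq_maxr.
  rewrite -(subnKC Hi0i); case: (Hmono i0 (i - i0)) => [<-|H] //.
  exact: Htr Hi0 H.
set L := iota (jj p lam n m k) (jj p lam n m k.+1 - jj p lam n m k).
have HL : forall x, x \in L -> Cert lt p beta n
    (fun a b => eval (P p n.+1 (inl (nu p lam n m x))) a <>
                eval (P p n.+1 (inl (nu p lam n m x))) b).
  move=> x Hx.
  have Hx1 : (jj p lam n m k <= x)%N by move: Hx; rewrite mem_iota => /andP [].
  have Hlt := Hbig x Hx1.
  have Hza : ltS lt (inl (nu p lam n m x)) alpha := below_plus Htr (Hin x) Hpl.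
  case: (window_or_above HD Hlt) => [HW|HA].
    exists 1, (fun _ => n.+1), (fun _ => nu p lam n m x); split => //.
    by move=> a b Hd; exists 0.
  exact: cert_le (leqnSn n) (IH _ Hza HA n.+1).
apply: cert_mono (cert_seq HL) => a b Hd.
have Hk : (k0 <= k)%N by exact: leq_maxl.
rewrite (Hk0 a k Hk alpha Hpl) (Hk0 b k Hk alpha Hpl) /gg in Hd.
apply: NNPP => Hno; apply: Hd; f_equal.
apply/eq_in_map => x Hx; apply: NNPP => Hne; apply: Hno; exists x; split => //.
Qed.

Lemma lemA (D : Type) (lt : D -> D -> Prop) (HD : is_delta lt) p (Hp : in_R lt p) beta (b : D) :
  (forall m g, plus_nat lt beta m g -> lt g b) ->
  forall n, Cert lt p beta n (fun a c => eval (P p n (inl b)) a <> eval (P p n (inl b)) c).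
Proof.
have HD' := HD; case: HD' => [Hirr [Htr [Htri [Hwf _]]]].
elim/(well_founded_ind Hwf): b => b IHb Hab.
have [c [m0 [Hlim [Hbc Hcb]]]] := decomp HD Hab.
apply: (step HD Hp (lam := inl c) (m := m0)).
- by right; exists c.
- exact: Hbc.
- exact: lift_plus.
- move=> zeta Hz Ha n'; exact: IHb zeta Hz Ha n'.
Qed.

Theorem mainTheorem10 (D : Type) (lt : D -> D -> Prop) (HD : is_delta lt)
  (p : cond D) (Hp : in_R lt p) :
  (* (i) *)
  (forall n (b : D), exists r (v : nat -> nat * nat),
     (forall i, (i < r)%N -> ((v i).1 < n)%N) /\
     forall a b' : assignment, (forall i, (i < r)%N -> a (v i) = b' (v i)) ->
       eval (P p n (inl b)) a = eval (P p n (inl b)) b') /\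
  (* (ii) *)
  (forall n m, exists r (l : nat -> nat) (z : nat -> D),
     (forall i, (i < r)%N -> (n < l i)%N /\ finite_ord lt (z i)) /\
     forall a b : assignment,
       (forall i, (i < r)%N ->
          eval (P p (l i) (inl (z i))) a = eval (P p (l i) (inl (z i))) b) ->
       a (n, m) = b (n, m)) /\
  (* general form *)
  (forall (beta : D) n (alpha : D + nat), omega_plus_le lt beta alpha ->
     exists r (l : nat -> nat) (z : nat -> D),
     (forall i, (i < r)%N ->
        (n < l i)%N /\ exists k, (0 < k)%N /\ plus_nat lt beta k (z i)) /\
     forall a b : assignment,
       eval (P p n alpha) a <> eval (P p n alpha) b ->
       exists i, (i < r)%N /\
         eval (P p (l i) (inl (z i))) a <> eval (P p (l i) (inl (z i))) b).
Proof.
have HD' := HD; case: HD' => [Hirr [Htr [Htri [Hwf [_ [[x0 _] _]]]]]].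
have Hgen : forall (beta : D) n (alpha : D + nat), omega_plus_le lt beta alpha ->
   Cert lt p beta n (fun a b => eval (P p n alpha) a <> eval (P p n alpha) b).
  move=> beta n [b|m'] Hab.
    by apply: lemA => // m g Hg; exact: Hab m g Hg.
  apply: (step HD Hp (lam := inr 0) (m := m')) => //.
  - by left.
  - exact: plus_inr.
  - move=> zeta _ Ha n'; exact: lemA.
split; [|split]; last exact: Hgen.
- move=> n b.
  case: Hp => _ _ Hdep _.
  have [s [Hall Heq]] := Hdep n b.
  exists (size (tvars s)), (fun i => nth (0, 0) (tvars s) i); split.
    move=> i Hi; exact: (allP Hall) _ (mem_nth _ Hi).
  move=> a b' Hab; rewrite -!Heq /eval; f_equal.
  apply/eq_in_map => v Hv; rewrite -(nth_index (0, 0) Hv); apply: Hab.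
  by rewrite index_mem.
- move=> n m.
  have [z0 [_ Hz0]] := min_elt Hwf (ex_intro (fun _ : D => True) x0 I).
  have Hom : omega_plus_le lt z0 (inr m) by [].
  have [r [l [z [H K]]]] := Hgen z0 n (inr m) Hom.
  exists r, l, z; split.
    move=> i Hi; have [H1 [k [_ Hk]]] := H i Hi; split => //.
    exists z0, k; split => // y Hy; exact: Hz0 y Hy I.
  move=> a b Hab; apply: NNPP => Hne.
  case: Hp => _ Hvar _ _.
  have Hd : eval (P p n (inr m)) a <> eval (P p n (inr m)) b by rewrite !Hvar.
  have [i [Hi Hdi]] := K a b Hd.
  exact: Hdi (Hab i Hi).
Qed.
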